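(* Let $(\mathscr{A},\mathscr{E})$ and $(\mathscr{B},\mathscr{F})$ be exact categories and let $M : \mathscr{B} \rightarrow \mathscr{A}$ be an exact functor having a right adjoint $R : \mathscr{A}\to\mathscr{B}$ and a left adjoint $L : \mathscr{A}\to\mathscr{B}$. Assume: (i) $\mathscr{A}$ is karoubian (idempotent complete); (ii) $L$ and $R$ are exact functors $(\mathscr{A},\mathscr{E}) \to (\mathscr{B},\mathscr{F})$; (iii) $\mathscr{E}_L^0 = \mathscr{E}_R^0$; denote this class by $\mathscr{E}'$; (iv) for every morphism $f : X \rightarrow X'$ in $\mathscr{A}$ such that there exists $\beta : LX' \to LX$ with $\beta \circ Lf = \mathrm{id}_{LX}$, the morphism $f$ is an inflation of $(\mathscr{A},\mathscr{E})$; (v) for every morphism $f : X \rightarrow X'$ in $\mathscr{A}$ such that there exists $\beta : RX' \to RX$ with $Rf \circ \beta = \mathrm{id}_{RX'}$, the morphism $f$ is a deflation of $(\mathscr{A},\mathscr{E})$. Then $(\mathscr{A},\mathscr{E}')$ is a Frobenius exact category, and its projective-injective objects are exactly the objects of $\mathscr{A}$ that are direct summands of objects of the form $MY$ with $Y \in \mathscr{B}$.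
   Context: An exact category $(\mathscr{A},\mathscr{E})$ is an additive category with a class $\mathscr{E}$ of kernel–cokernel pairs $X \rightarrowtail Y \twoheadrightarrow Z$ (conflations; the first map is an inflation, the second a deflation) satisfying Quillen's axioms; an exact functor sends conflations to conflations. For an exact functor $F:(\mathscr{A},\mathscr{E})\to(\mathscr{B},\mathscr{F})$, $\mathscr{E}_F^0 = \{ s \in \mathscr{E} : Fs \text{ is split exact in } \mathscr{B}\}$; $(\mathscr{A},\mathscr{E}_F^0)$ is an exact category. A Frobenius category is an exact category with enough projectives and enough injectives in which the projective objects coincide with the injective objects. *)

(* Defs.v *)
From HB Require Import structures.
From mathcomp Require Import all_boot all_algebra.
Set Implicit Arguments. Unset Strict Implicit. Unset Printing Implicit Defensive.
Import GRing.Theory.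
Local Open Scope ring_scope.

Record precat := PreCat {
  ob :> Type;
  chom : ob -> ob -> zmodType;
  ccomp : forall X Y Z : ob, chom Y Z -> chom X Y -> chom X Z;
  cid : forall X : ob, chom X X }.
Arguments chom {p}.
Arguments ccomp {p X Y Z}.
Arguments cid {p}.

Section Additive.
Variable C : precat.

Definition is_biproduct (X Y P : C) (i1 : chom X P) (i2 : chom Y P)
  (p1 : chom P X) (p2 : chom P Y) : Prop :=
  [/\ ccomp p1 i1 = cid X, ccomp p2 i2 = cid Y, ccomp p1 i2 = 0, ccomp p2 i1 = 0
    & ccomp i1 p1 + ccomp i2 p2 = cid P].

Definition is_zero_object (Z : C) : Prop :=
  forall X : C, (forall f : chom X Z, f = 0) /\ (forall g : chom Z X, g = 0).

Definition is_additive_category : Prop :=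
  (forall (X Y Z W : C) (f : chom X Y) (g : chom Y Z) (h : chom Z W),
          ccomp h (ccomp g f) = ccomp (ccomp h g) f)
  /\ (forall (X Y : C) (f : chom X Y), ccomp (cid Y) f = f /\ ccomp f (cid X) = f)
  /\ (forall (X Y Z : C) (f f' : chom Y Z) (g : chom X Y),
          ccomp (f + f') g = ccomp f g + ccomp f' g)
  /\ (forall (X Y Z : C) (f : chom Y Z) (g g' : chom X Y),
          ccomp f (g + g') = ccomp f g + ccomp f g')
  /\ (exists Z : C, is_zero_object Z)
  /\ (forall X Y : C, exists (P : C) (i1 : chom X P) (i2 : chom Y P)
          (p1 : chom P X) (p2 : chom P Y), is_biproduct i1 i2 p1 p2).

Definition is_iso (X Y : C) (f : chom X Y) : Prop :=
  exists g : chom Y X, ccomp g f = cid X /\ ccomp f g = cid Y.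

Definition is_kernel (X Y Z : C) (i : chom X Y) (d : chom Y Z) : Prop :=
  ccomp d i = 0 /\
  forall (W : C) (g : chom W Y), ccomp d g = 0 -> exists! h : chom W X, ccomp i h = g.

Definition is_cokernel (X Y Z : C) (i : chom X Y) (d : chom Y Z) : Prop :=
  ccomp d i = 0 /\
  forall (W : C) (g : chom Y W), ccomp g i = 0 -> exists! h : chom Z W, ccomp h d = g.

Definition is_kc_pair (X Y Z : C) (i : chom X Y) (d : chom Y Z) : Prop :=
  is_kernel i d /\ is_cokernel i d.

(** A class of composable pairs X -> Y -> Z (candidate conflations). *)
Definition cclass := forall X Y Z : C, chom X Y -> chom Y Z -> Prop.

Definition inflation (E : cclass) (X Y : C) (i : chom X Y) : Prop :=
  exists (Z : C) (d : chom Y Z), E X Y Z i d.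
Definition deflation (E : cclass) (Y Z : C) (d : chom Y Z) : Prop :=
  exists (X : C) (i : chom X Y), E X Y Z i d.

Definition is_pushout (X Y X' P : C) (f : chom X Y) (g : chom X X')
  (f' : chom X' P) (g' : chom Y P) : Prop :=
  ccomp f' g = ccomp g' f /\
  forall (W : C) (u : chom Y W) (v : chom X' W), ccomp u f = ccomp v g ->
    exists! h : chom P W, ccomp h g' = u /\ ccomp h f' = v.

Definition is_pullback (Y Z Z' P : C) (d : chom Y Z) (h : chom Z' Z)
  (d' : chom P Z') (h' : chom P Y) : Prop :=
  ccomp d h' = ccomp h d' /\
  forall (W : C) (u : chom W Y) (v : chom W Z'), ccomp d u = ccomp h v ->
    exists! k : chom W P, ccomp h' k = u /\ ccomp d' k = v.

(** Quillen's axioms (in Bühler's formulation). *)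
Definition is_exact_structure (E : cclass) : Prop :=
  (forall (X Y Z : C) (i : chom X Y) (d : chom Y Z), E X Y Z i d -> is_kc_pair i d)
  /\ (forall (X Y Z X' Y' Z' : C) (i : chom X Y) (d : chom Y Z)
              (i' : chom X' Y') (d' : chom Y' Z')
              (a : chom X X') (b : chom Y Y') (c : chom Z Z'),
          E X Y Z i d -> is_iso a -> is_iso b -> is_iso c ->
          ccomp b i = ccomp i' a -> ccomp c d = ccomp d' b -> E X' Y' Z' i' d')
  /\ (forall X : C, deflation E (cid X))
  /\ (forall X : C, inflation E (cid X))
  /\ (forall (X Y Z : C) (f : chom X Y) (g : chom Y Z),
          deflation E f -> deflation E g -> deflation E (ccomp g f))
  /\ (forall (X Y Z : C) (f : chom X Y) (g : chom Y Z),
          inflation E f -> inflation E g -> inflation E (ccomp g f))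
  /\ (forall (X Y X' : C) (i : chom X Y) (f : chom X X'), inflation E i ->
          exists (P : C) (i' : chom X' P) (f' : chom Y P),
            is_pushout i f i' f' /\ inflation E i')
  /\ (forall (Y Z Z' : C) (d : chom Y Z) (h : chom Z' Z), deflation E d ->
          exists (P : C) (d' : chom P Z') (h' : chom P Y),
            is_pullback d h d' h' /\ deflation E d').

Definition is_exact_category (E : cclass) : Prop :=
  is_additive_category /\ is_exact_structure E.

Definition is_split_exact (X Y Z : C) (i : chom X Y) (d : chom Y Z) : Prop :=
  exists (r : chom Y X) (s : chom Z Y), is_biproduct i s r d.

Definition is_karoubian : Prop :=
  forall (X : C) (e : chom X X), ccomp e e = e ->
    exists (Y : C) (r : chom X Y) (s : chom Y X), ccomp s r = e /\ ccomp r s = cid Y.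

Definition is_projective (E : cclass) (P : C) : Prop :=
  forall (Y Z : C) (d : chom Y Z), deflation E d ->
    forall f : chom P Z, exists g : chom P Y, ccomp d g = f.

Definition is_injective (E : cclass) (I : C) : Prop :=
  forall (X Y : C) (i : chom X Y), inflation E i ->
    forall f : chom X I, exists g : chom Y I, ccomp g i = f.

Definition is_frobenius (E : cclass) : Prop :=
  [/\ is_exact_category E,
      (forall X : C, exists (P : C) (d : chom P X), is_projective E P /\ deflation E d),
      (forall X : C, exists (I : C) (i : chom X I), is_injective E I /\ inflation E i)
    & (forall X : C, is_projective E X <-> is_injective E X)].

Definition is_direct_summand (X W : C) : Prop :=
  exists (X' : C) (i1 : chom X W) (i2 : chom X' W) (p1 : chom W X) (p2 : chom W X'),
    is_biproduct i1 i2 p1 p2.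

End Additive.

Record functor (A B : precat) := Functor {
  fob :> A -> B;
  fmap : forall X Y : A, chom X Y -> chom (fob X) (fob Y) }.
Arguments fmap {A B} f {X Y}.

Definition is_additive_functor (A B : precat) (F : functor A B) : Prop :=
  [/\ (forall (X Y Z : A) (f : chom X Y) (g : chom Y Z),
          fmap F (ccomp g f) = ccomp (fmap F g) (fmap F f)),
      (forall X : A, fmap F (cid X) = cid (F X))
    & (forall (X Y : A) (f g : chom X Y), fmap F (f + g) = fmap F f + fmap F g)].

Definition is_exact_functor (A B : precat) (EA : cclass A) (EB : cclass B)
  (F : functor A B) : Prop :=
  is_additive_functor F /\
  forall (X Y Z : A) (i : chom X Y) (d : chom Y Z),
    EA X Y Z i d -> EB (F X) (F Y) (F Z) (fmap F i) (fmap F d).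

Definition EF0 (A B : precat) (E : cclass A) (F : functor A B) : cclass A :=
  fun X Y Z i d => E X Y Z i d /\ is_split_exact (fmap F i) (fmap F d).

(** F is left adjoint to G (F : B -> A, G : A -> B), via unit and counit. *)
Definition is_adjunction (A B : precat) (F : functor B A) (G : functor A B) : Prop :=
  exists (eta : forall Y : B, chom Y (G (F Y))) (eps : forall X : A, chom (F (G X)) X),
    [/\ (forall (Y Y' : B) (g : chom Y Y'),
            ccomp (eta Y') g = ccomp (fmap G (fmap F g)) (eta Y)),
        (forall (X X' : A) (f : chom X X'),
            ccomp f (eps X) = ccomp (eps X') (fmap F (fmap G f))),
        (forall Y : B, ccomp (eps (F Y)) (fmap F (eta Y)) = cid (F Y))
      & (forall X : A, ccomp (fmap G (eps X)) (eta (G X)) = cid (G X))].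

(* Main.v *)
Require Import Defs.
From mathcomp Require Import all_boot all_algebra.
Set Implicit Arguments. Unset Strict Implicit. Unset Printing Implicit Defensive.
Import GRing.Theory.
Local Open Scope ring_scope.

Local Notation "g '∘' f" := (ccomp g f) (at level 40, left associativity).

Section Add.
Variable C : precat.
Hypothesis HC : is_additive_category C.

Lemma compA (X Y Z W : C) (f : chom X Y) (g : chom Y Z) (h : chom Z W) :
  h ∘ (g ∘ f) = (h ∘ g) ∘ f.
Proof. by case: HC => H _; apply: H. Qed.
Lemma comp1l (X Y : C) (f : chom X Y) : cid Y ∘ f = f.
Proof. by case: HC => _ [H _]; case: (H _ _ f). Qed.
Lemma comp1r (X Y : C) (f : chom X Y) : f ∘ cid X = f.
Proof. by case: HC => _ [H _]; case: (H _ _ f). Qed.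
Lemma compDl (X Y Z : C) (f f' : chom Y Z) (g : chom X Y) :
  (f + f') ∘ g = f ∘ g + f' ∘ g.
Proof. by case: HC => _ [_ [H _]]; apply: H. Qed.
Lemma compDr (X Y Z : C) (f : chom Y Z) (g g' : chom X Y) :
  f ∘ (g + g') = f ∘ g + f ∘ g'.
Proof. by case: HC => _ [_ [_ [H _]]]; apply: H. Qed.
Lemma comp0l (X Y Z : C) (g : chom X Y) : (0 : chom Y Z) ∘ g = 0.
Proof.
have H := compDl (0 : chom Y Z) 0 g; rewrite addr0 in H.
by apply: (addrI ((0 : chom Y Z) ∘ g)); rewrite -H addr0.
Qed.
Lemma comp0r (X Y Z : C) (f : chom Y Z) : f ∘ (0 : chom X Y) = 0.
Proof.
have H := compDr f (0 : chom X Y) 0; rewrite addr0 in H.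
by apply: (addrI (f ∘ (0 : chom X Y))); rewrite -H addr0.
Qed.
Lemma compNl (X Y Z : C) (f : chom Y Z) (g : chom X Y) : (- f) ∘ g = - (f ∘ g).
Proof. by apply: (addrI (f ∘ g)); rewrite -compDl !subrr comp0l. Qed.
Lemma compNr (X Y Z : C) (f : chom Y Z) (g : chom X Y) : f ∘ (- g) = - (f ∘ g).
Proof. by apply: (addrI (f ∘ g)); rewrite -compDr !subrr comp0r. Qed.
Lemma compBl (X Y Z : C) (f f' : chom Y Z) (g : chom X Y) :
  (f - f') ∘ g = f ∘ g - f' ∘ g.
Proof. by rewrite compDl compNl. Qed.
Lemma compBr (X Y Z : C) (f : chom Y Z) (g g' : chom X Y) :
  f ∘ (g - g') = f ∘ g - f ∘ g'.
Proof. by rewrite compDr compNr. Qed.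

Lemma kernel_mono (X Y Z W : C) (i : chom X Y) (d : chom Y Z) (h1 h2 : chom W X) :
  is_kernel i d -> i ∘ h1 = i ∘ h2 -> h1 = h2.
Proof.
case=> Hdi Hk E.
have H0 : d ∘ (i ∘ h1) = 0 by rewrite compA Hdi comp0l.
have [h [_ Hu]] := Hk W _ H0.
by rewrite -(Hu h1 erefl) (Hu h2 (esym E)).
Qed.

Lemma coker_epi (X Y Z W : C) (i : chom X Y) (d : chom Y Z) (h1 h2 : chom Z W) :
  is_cokernel i d -> h1 ∘ d = h2 ∘ d -> h1 = h2.
Proof.
case=> Hdi Hk E.
have H0 : (h1 ∘ d) ∘ i = 0 by rewrite -compA Hdi comp0r.
have [h [_ Hu]] := Hk W _ H0.
by rewrite -(Hu h1 erefl) (Hu h2 (esym E)).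
Qed.

Lemma split_of_sec (X Y Z : C) (i : chom X Y) (d : chom Y Z) (s : chom Z Y) :
  is_kc_pair i d -> d ∘ s = cid Z -> is_split_exact i d.
Proof.
case=> Hk Hc Hds; have Hdi := Hk.1.
have H0 : d ∘ (cid Y - s ∘ d) = 0 by rewrite compBr comp1r compA Hds comp1l subrr.
have [r [Hr _]] := Hk.2 Y _ H0.
exists r, s; split=> //.
- apply: (kernel_mono Hk).
  by rewrite compA Hr comp1r compBl comp1l -compA Hdi comp0r subr0.
- apply: (kernel_mono Hk).
  by rewrite compA Hr comp0r compBl comp1l -compA Hds comp1r subrr.
- by rewrite Hr subrK.
Qed.

Lemma split_of_ret (X Y Z : C) (i : chom X Y) (d : chom Y Z) (p : chom Y X) :
  is_kc_pair i d -> p ∘ i = cid X -> is_split_exact i d.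
Proof.
case=> Hk Hc Hpi; have Hdi := Hk.1.
have H0 : (cid Y - i ∘ p) ∘ i = 0 by rewrite compBl comp1l -compA Hpi comp1r subrr.
have [s [Hs _]] := Hc.2 Y _ H0.
exists p, s; split=> //.
- apply: (coker_epi Hc).
  by rewrite -compA Hs compBr comp1r compA Hdi comp0l subr0 comp1l.
- apply: (coker_epi Hc).
  by rewrite -compA Hs compBr comp1r compA Hpi comp1l subrr comp0l.
- by rewrite Hs addrC subrK.
Qed.

Lemma summand_of_retract (Hk : is_karoubian C) (X W : C) (p : chom W X) (s : chom X W) :
  p ∘ s = cid X -> is_direct_summand X W.
Proof.
move=> Hps.
have He : (cid W - s ∘ p) ∘ (cid W - s ∘ p) = cid W - s ∘ p.
  rewrite compBl comp1l compBr comp1r -!compA (compA p s) Hps comp1l subrr subr0.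
  done.
have [X' [r [t [Htr Hrt]]]] := Hk _ _ He.
exists X', s, t, p, r; split=> //.
- have -> : p ∘ t = (p ∘ (t ∘ r)) ∘ t by rewrite -!compA Hrt comp1r.
  by rewrite Htr compBr comp1r compA Hps comp1l subrr comp0l.
- have -> : r ∘ s = r ∘ ((t ∘ r) ∘ s) by rewrite !compA Hrt comp1l.
  by rewrite Htr compBl comp1l -compA Hps comp1r subrr comp0r.
- by rewrite Htr addrC subrK.
Qed.

Lemma proj_retract (E : cclass C) (W P : C) (p : chom W P) (s : chom P W) :
  is_projective E W -> p ∘ s = cid P -> is_projective E P.
Proof.
move=> HW Hps Y Z d Hd f.
have [g Hg] := HW Y Z d Hd (f ∘ p).
by exists (g ∘ s); rewrite compA Hg -compA Hps comp1r.
Qed.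

Lemma inj_retract (E : cclass C) (W P : C) (p : chom W P) (s : chom P W) :
  is_injective E W -> p ∘ s = cid P -> is_injective E P.
Proof.
move=> HW Hps X Y i Hi f.
have [g Hg] := HW X Y i Hi (s ∘ f).
by exists (p ∘ g); rewrite -compA Hg compA Hps comp1l.
Qed.

End Add.

Section Fun.
Variables (A B : precat) (G : functor A B).
Hypothesis HG : is_additive_functor G.
Lemma fmapM (X Y Z : A) (f : chom X Y) (g : chom Y Z) :
  fmap G (g ∘ f) = fmap G g ∘ fmap G f.
Proof. by case: HG. Qed.
Lemma fmap1 (X : A) : fmap G (cid X) = cid (G X).
Proof. by case: HG. Qed.
End Fun.

Section EF0s.
Variables (A B : precat) (E : cclass A) (F : cclass B) (G : functor A B).
Hypothesis HB : is_exact_category F.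
Hypothesis HG : is_exact_functor E F G.

Lemma EF0_ret (X Y Z : A) (i : chom X Y) (d : chom Y Z) (p : chom (G Y) (G X)) :
  E i d -> p ∘ fmap G i = cid (G X) -> EF0 E G i d.
Proof.
move=> HE Hp; split=> //.
apply: (split_of_ret HB.1 _ Hp).
exact: HB.2.1 _ _ _ _ _ (HG.2 _ _ _ _ _ HE).
Qed.

Lemma EF0_sec (X Y Z : A) (i : chom X Y) (d : chom Y Z) (s : chom (G Z) (G Y)) :
  E i d -> fmap G d ∘ s = cid (G Z) -> EF0 E G i d.
Proof.
move=> HE Hp; split=> //.
apply: (split_of_sec HB.1 _ Hp).
exact: HB.2.1 _ _ _ _ _ (HG.2 _ _ _ _ _ HE).
Qed.

Lemma EF0_retr (X Y Z : A) (i : chom X Y) (d : chom Y Z) :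
  EF0 E G i d -> exists p, p ∘ fmap G i = cid (G X).
Proof. by case=> _ [r [s [H _ _ _ _]]]; exists r. Qed.

Lemma EF0_secr (X Y Z : A) (i : chom X Y) (d : chom Y Z) :
  EF0 E G i d -> exists s, fmap G d ∘ s = cid (G Z).
Proof. by case=> _ [r [s [_ H _ _ _]]]; exists s. Qed.
End EF0s.

Section Main.
Variables (A B : precat) (E : cclass A) (F : cclass B)
  (M : functor B A) (R L : functor A B).
Hypotheses (HA : is_exact_category E) (HB : is_exact_category F)
  (HM : is_exact_functor F E M) (HL : is_exact_functor E F L)
  (HR : is_exact_functor E F R).
Hypothesis HLR : forall (X Y Z : A) (i : chom X Y) (d : chom Y Z),
      EF0 E L i d <-> EF0 E R i d.
Hypothesis Hiv : forall (X X' : A) (f : chom X X'),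
      (exists beta : chom (L X') (L X), ccomp beta (fmap L f) = cid (L X)) ->
      inflation E f.
Hypothesis Hv : forall (X X' : A) (f : chom X X'),
      (exists beta : chom (R X') (R X), ccomp (fmap R f) beta = cid (R X')) ->
      deflation E f.
Variables (eta : forall X : A, chom X (M (L X))) (eps : forall W : B, chom (L (M W)) W).
Hypotheses
  (etaN : forall (X X' : A) (g : chom X X'), eta X' ∘ g = fmap M (fmap L g) ∘ eta X)
  (epsN : forall (W W' : B) (f : chom W W'), f ∘ eps W = eps W' ∘ fmap L (fmap M f))
  (tri1 : forall X, eps (L X) ∘ fmap L (eta X) = cid (L X))
  (tri2 : forall W, fmap M (eps W) ∘ eta (M W) = cid (M W)).
Variables (eta' : forall Y : B, chom Y (R (M Y))) (eps' : forall X : A, chom (M (R X)) X).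
Hypotheses
  (etaN' : forall (Y Y' : B) (g : chom Y Y'), eta' Y' ∘ g = fmap R (fmap M g) ∘ eta' Y)
  (epsN' : forall (X X' : A) (f : chom X X'), f ∘ eps' X = eps' X' ∘ fmap M (fmap R f))
  (tri1' : forall Y, eps' (M Y) ∘ fmap M (eta' Y) = cid (M Y))
  (tri2' : forall X, fmap R (eps' X) ∘ eta' (R X) = cid (R X)).

Let HAa := HA.1.
Let HBa := HB.1.
Let HMa := HM.1.
Let HLa := HL.1.
Let HRa := HR.1.

Lemma ex_iso : forall (X Y Z X' Y' Z' : A) (i : chom X Y) (d : chom Y Z)
              (i' : chom X' Y') (d' : chom Y' Z')
              (a : chom X X') (b : chom Y Y') (c : chom Z Z'),
          EF0 E L i d -> is_iso a -> is_iso b -> is_iso c ->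
          ccomp b i = ccomp i' a -> ccomp c d = ccomp d' b -> EF0 E L i' d'.
Proof.
move=> X Y Z X' Y' Z' i d i' d' a b c [HE Hs] Ha Hb Hc Hbi Hcd.
have HE' := HA.2.2.1 _ _ _ _ _ _ _ _ _ _ _ _ _ HE Ha Hb Hc Hbi Hcd.
have [p Hp] := EF0_retr (conj HE Hs).
case: Ha => ai [Ha1 Ha2]; case: Hb => bi [Hb1 Hb2].
have e : bi ∘ i' = i ∘ ai.
  by rewrite -[bi ∘ i'](comp1r HAa) -Ha2 !(compA HAa) -(compA HAa _ _ bi) -Hbi
     (compA HAa) Hb1 (comp1l HAa).
apply: (EF0_ret HB HL HE' (p := fmap L a ∘ p ∘ fmap L bi)).
by rewrite -!(compA HBa) -(fmapM HLa) e (fmapM HLa) (compA HBa _ _ p) Hp (comp1l HBa)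
  -(fmapM HLa) Ha2 (fmap1 HLa).
Qed.


Lemma ex_def1 (X : A) : deflation (EF0 E L) (cid X).
Proof.
case: HA => _ [_ [_ [Edef1 _]]].
have [X0 [i0 HE]] := Edef1 X.
exists X0, i0; apply: (EF0_sec HB HL HE (s := cid (L X))).
by rewrite (fmap1 HLa) (comp1l HBa).
Qed.

Lemma ex_inf1 (X : A) : inflation (EF0 E L) (cid X).
Proof.
case: HA => _ [_ [_ [_ [Einf1 _]]]].
have [X0 [i0 HE]] := Einf1 X.
exists X0, i0; apply: (EF0_ret HB HL HE (p := cid (L X))).
by rewrite (fmap1 HLa) (comp1l HBa).
Qed.

Lemma ex_defc (X Y Z : A) (f : chom X Y) (g : chom Y Z) :
  deflation (EF0 E L) f -> deflation (EF0 E L) g -> deflation (EF0 E L) (g ∘ f).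
Proof.
case: HA => _ [_ [_ [_ [_ [Edefc _]]]]].
move=> [X1 [i1 Hf]] [X2 [i2 Hg]].
have [sf Hsf] := EF0_secr Hf; have [sg Hsg] := EF0_secr Hg.
have Hf' : deflation E f by exists X1, i1; case: Hf.
have Hg' : deflation E g by exists X2, i2; case: Hg.
have [X3 [i3 HE]] := Edefc _ _ _ _ _ Hf' Hg'.
exists X3, i3; apply: (EF0_sec HB HL HE (s := sf ∘ sg)).
by rewrite (fmapM HLa) -(compA HBa) (compA HBa _ _ (fmap L f)) Hsf (comp1l HBa) Hsg.
Qed.

Lemma ex_infc (X Y Z : A) (f : chom X Y) (g : chom Y Z) :
  inflation (EF0 E L) f -> inflation (EF0 E L) g -> inflation (EF0 E L) (g ∘ f).
Proof.
case: HA => _ [_ [_ [_ [_ [_ [Einfc _]]]]]].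
move=> [X1 [i1 Hf]] [X2 [i2 Hg]].
have [pf Hpf] := EF0_retr Hf; have [pg Hpg] := EF0_retr Hg.
have Hf' : inflation E f by exists X1, i1; case: Hf.
have Hg' : inflation E g by exists X2, i2; case: Hg.
have [X3 [i3 HE]] := Einfc _ _ _ _ _ Hf' Hg'.
exists X3, i3; apply: (EF0_ret HB HL HE (p := pf ∘ pg)).
by rewrite (fmapM HLa) -(compA HBa) (compA HBa _ _ pg) Hpg (comp1l HBa) Hpf.
Qed.

Lemma ex_po (X Y X' : A) (i : chom X Y) (f : chom X X') : inflation (EF0 E L) i ->
  exists (P : A) (i' : chom X' P) (f' : chom Y P),
    is_pushout i f i' f' /\ inflation (EF0 E L) i'.
Proof.
case: HA => _ [_ [_ [_ [_ [_ [_ [Epo _]]]]]]].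
move=> [Z [d [HE Hs]]].
have [p Hp] := EF0_retr (conj HE Hs).
have Hi : inflation E i by exists Z, d.
have [P [i' [f' [Hpo [Z' [d' HE']]]]]] := Epo X Y X' i f Hi.
have Huv : (fmap M (fmap L f ∘ p) ∘ eta Y) ∘ i = eta X' ∘ f.
  rewrite -(compA HAa) (etaN i) (compA HAa) -(fmapM HMa) -(compA HBa) Hp (comp1r HBa).
  by rewrite etaN.
have [h [[Hh1 Hh2] _]] := Hpo.2 _ _ _ Huv.
exists P, i', f'; split=> //; exists Z', d'.
apply: (EF0_ret HB HL HE' (p := eps (L X') ∘ fmap L h)).
by rewrite -(compA HBa) -(fmapM HLa) Hh2 tri1.
Qed.

Lemma ex_pb (Y Z Z' : A) (d : chom Y Z) (h : chom Z' Z) : deflation (EF0 E L) d ->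
  exists (P : A) (d' : chom P Z') (h' : chom P Y),
    is_pullback d h d' h' /\ deflation (EF0 E L) d'.
Proof.
case: HA => _ [_ [_ [_ [_ [_ [_ [_ Epb]]]]]]].
move=> [X [i [HE Hs]]].
have [s Hs'] := EF0_secr ((HLR i d).1 (conj HE Hs)).
have Hd : deflation E d by exists X, i.
have [P [d' [h' [Hpb [X'' [i'' HE'']]]]]] := Epb Y Z Z' d h Hd.
have Huv : d ∘ (eps' Y ∘ fmap M (s ∘ fmap R h)) = h ∘ eps' Z'.
  rewrite (compA HAa) (epsN' d) -(compA HAa) -(fmapM HMa) (compA HBa) Hs' (comp1l HBa).
  by rewrite epsN'.
have [k [[Hk1 Hk2] _]] := Hpb.2 _ _ _ Huv.
exists P, d', h'; split=> //; exists X'', i''; apply/HLR.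
apply: (EF0_sec HB HR HE'' (s := fmap R k ∘ eta' (R Z'))).
by rewrite (compA HBa) -(fmapM HRa) Hk2 tri2'.
Qed.

Lemma proj_M (Y0 : B) : is_projective (EF0 E L) (M Y0).
Proof.
move=> Y Z d [X [i Hc]] f.
have [s Hs] := EF0_secr ((HLR i d).1 Hc).
exists (eps' Y ∘ fmap M (s ∘ fmap R f ∘ eta' Y0)).
rewrite (compA HAa) (epsN' d) -(compA HAa) -(fmapM HMa) !(compA HBa) Hs (comp1l HBa).
by rewrite (fmapM HMa) (compA HAa) -(epsN' f) -(compA HAa) tri1' (comp1r HAa).
Qed.

Lemma inj_M (Y0 : B) : is_injective (EF0 E L) (M Y0).
Proof.
move=> X Y i [Z [d Hc]] f.
have [p Hp] := EF0_retr Hc.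
exists (fmap M (eps Y0 ∘ fmap L f ∘ p) ∘ eta Y).
rewrite -(compA HAa) (etaN i) (compA HAa) -(fmapM HMa) -(compA HBa) Hp (comp1r HBa).
by rewrite (fmapM HMa) -(compA HAa) -(etaN f) (compA HAa) tri2 (comp1l HAa).
Qed.

Lemma exact' : is_exact_structure (EF0 E L).
Proof.
split; first by move=> X Y Z i d [HE _]; exact: HA.2.1 _ _ _ _ _ HE.
split; first exact: ex_iso.
split; first exact: ex_def1.
split; first exact: ex_inf1.
split; first exact: ex_defc.
split; first exact: ex_infc.
split; first exact: ex_po.
exact: ex_pb.
Qed.

Theorem main_sec (kar : is_karoubian A) :
  is_frobenius (EF0 E L) /\
  (forall X : A,
      (is_projective (EF0 E L) X /\ is_injective (EF0 E L) X) <->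
      exists Y : B, is_direct_summand X (M Y)).
Proof.
have Hex : is_exact_category (EF0 E L) := conj HAa exact'.
have enp : forall X, deflation (EF0 E L) (eps' X).
  move=> X; have [K [i HE]] := Hv (ex_intro _ (eta' (R X)) (tri2' X)).
  by exists K, i; apply/HLR; exact: (EF0_sec HB HR HE (tri2' X)).
have eni : forall X, inflation (EF0 E L) (eta X).
  move=> X; have [Z [d HE]] := Hiv (ex_intro _ (eps (L X)) (tri1 X)).
  by exists Z, d; exact: (EF0_ret HB HL HE (tri1 X)).
have p2i : forall X, is_projective (EF0 E L) X -> is_injective (EF0 E L) X.
  move=> X HX; have [g Hg] := HX _ _ _ (enp X) (cid X).
  exact: (inj_retract HAa (@inj_M (R X)) Hg).
have i2p : forall X, is_injective (EF0 E L) X -> is_projective (EF0 E L) X.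
  move=> X HX; have [g Hg] := HX _ _ _ (eni X) (cid X).
  exact: (proj_retract HAa (@proj_M (L X)) Hg).
split; first split=> //.
- by move=> X; exists (M (R X)), (eps' X); split; [exact: proj_M | exact: enp].
- by move=> X; exists (M (L X)), (eta X); split; [exact: inj_M | exact: eni].
- by move=> X; split; [exact: p2i | exact: i2p].
move=> X; split.
- case=> HP _; have [g Hg] := HP _ _ _ (enp X) (cid X).
  by exists (R X); exact: (summand_of_retract HAa kar Hg).
- case=> Y [X' [i1 [i2 [p1 [p2 [H1 _ _ _ _]]]]]].
  by split; [exact: (proj_retract HAa (@proj_M Y) H1) | exact: (inj_retract HAa (@inj_M Y) H1)].
Qed.

End Main.

Theorem mainTheorem3 (A B : precat) (E : cclass A) (F : cclass B)
  (M : functor B A) (R L : functor A B) :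
  is_exact_category E -> is_exact_category F ->
  is_exact_functor F E M ->
  is_adjunction M R ->           (* M -| R *)
  is_adjunction L M ->           (* L -| M *)
  is_karoubian A ->
  is_exact_functor E F L -> is_exact_functor E F R ->
  (forall (X Y Z : A) (i : chom X Y) (d : chom Y Z),
      EF0 E L i d <-> EF0 E R i d) ->
  (forall (X X' : A) (f : chom X X'),
      (exists beta : chom (L X') (L X), ccomp beta (fmap L f) = cid (L X)) ->
      inflation E f) ->
  (forall (X X' : A) (f : chom X X'),
      (exists beta : chom (R X') (R X), ccomp (fmap R f) beta = cid (R X')) ->
      deflation E f) ->
  is_frobenius (EF0 E L) /\
  (forall X : A,
      (is_projective (EF0 E L) X /\ is_injective (EF0 E L) X) <->
      exists Y : B, is_direct_summand X (M Y)).
Proof.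
move=> HA HB HM [eta' [eps' [n1 n2 t1 t2]]] [eta [eps [m1 m2 s1 s2]]] kar HL HR HLR Hiv Hv.
exact: (main_sec HA HB HM HL HR HLR Hiv Hv m1 s1 s2 n2 t1 t2 kar).
Qed.
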